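(* Let $n\ge 1$ and let $\mathcal{M}^n$ denote the set of real symmetric positive semidefinite $n\times n$ matrices. Let $F:(\mathcal{M}^n)^n\to\mathbb{R}$ be a nonnegative function which is additive in each variable (i.e. $F(\dots,A+A',\dots)=F(\dots,A,\dots)+F(\dots,A',\dots)$ in each argument, the others fixed). If there is a constant $c$ such that $F(A_1,\dots,A_n)\le c\,D(A_1,\dots,A_n)$ for all $A_1,\dots,A_n\in\mathcal{M}^n$, then there is a constant $a$ with $F=a\,D$ on $(\mathcal{M}^n)^n$, where $D$ is the mixed discriminant.
   Context: The mixed discriminant $D:(\mathcal{M}^n)^n\to\mathbb{R}$ is the unique symmetric function such that $\det(\lambda_1A_1+\dots+\lambda_mA_m)=\sum_{i_1,\dots,i_n=1}^m\lambda_{i_1}\cdots\lambda_{i_n}D(A_{i_1},\dots,A_{i_n})$ for all $m\in\mathbb{N}$, $A_1,\dots,A_m\in\mathcal{M}^n$ and $\lambda_1,\dots,\lambda_m\ge 0$. *)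

(* Defs.v *)
From HB Require Import structures.
From mathcomp Require Import all_boot all_order all_algebra all_fingroup.
From mathcomp Require Import reals.
Set Implicit Arguments. Unset Strict Implicit. Unset Printing Implicit Defensive.
Import Order.TTheory GRing.Theory Num.Theory.
Local Open Scope ring_scope.

Definition psd (R : realType) (n : nat) (A : 'M[R]_n) : Prop :=
  A^T = A /\ forall x : 'cV[R]_n, 0 <= (x^T *m A *m x) 0 0.

Definition all_psd (R : realType) (n : nat) (A : {ffun 'I_n -> 'M[R]_n}) : Prop :=
  forall i, psd (A i).

Definition upd (R : realType) (n : nat) (A : {ffun 'I_n -> 'M[R]_n}) (i : 'I_n)
  (B : 'M[R]_n) : {ffun 'I_n -> 'M[R]_n} :=
  [ffun j => if j == i then B else A j].

Definition is_mixed_discriminant (R : realType) (n : nat)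
  (D : {ffun 'I_n -> 'M[R]_n} -> R) : Prop :=
  (forall (A : {ffun 'I_n -> 'M[R]_n}) (s : 'S_n),
      all_psd A -> D [ffun j => A (s j)] = D A) /\
  (forall (m : nat) (B : 'I_m -> 'M[R]_n) (lam : 'I_m -> R),
      (forall k, psd (B k)) -> (forall k, 0 <= lam k) ->
      \det (\sum_(k < m) lam k *: B k) =
      \sum_(s : {ffun 'I_n -> 'I_m}) (\prod_(j < n) lam (s j)) * D [ffun j => B (s j)]).

Definition multiadditive (R : realType) (n : nat) (F : {ffun 'I_n -> 'M[R]_n} -> R) : Prop :=
  forall (A : {ffun 'I_n -> 'M[R]_n}) (i : 'I_n) (B B' : 'M[R]_n),
    all_psd A -> psd B -> psd B' ->
    F (upd A i (B + B')) = F (upd A i B) + F (upd A i B').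

(* Main.v *)
Require Import Defs.
From HB Require Import structures.
From mathcomp Require Import all_boot all_order all_algebra all_fingroup.
From mathcomp Require Import reals.
From mathcomp Require Import ring lra zify.
Import Order.TTheory GRing.Theory Num.Theory.
Local Open Scope ring_scope.
Set Implicit Arguments. Unset Strict Implicit. Unset Printing Implicit Defensive.

Section Main.
Variable R : realType.
Variable n : nat.
Local Notation T := {ffun 'I_n -> 'M[R]_n}.

Definition rank1 (x : 'rV[R]_n) : 'M[R]_n := x^T *m x.

Lemma rank1E x a b : rank1 x a b = x 0 a * x 0 b.
Proof. by rewrite !mxE big_ord1 !mxE. Qed.

Lemma psd_rank1 x : psd (rank1 x).
Proof.
split; first by rewrite /rank1 trmx_mul trmxK.
move=> y; rewrite /rank1 !mulmxA -mulmxA -trmx_mul.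
rewrite !mxE big_ord1 mxE -expr2; exact: sqr_ge0.
Qed.

Lemma psdD (A B : 'M[R]_n) : psd A -> psd B -> psd (A + B).
Proof.
move=> [sA pA] [sB pB]; split; first by rewrite linearD /= sA sB.
move=> x; rewrite mulmxDr mulmxDl mxE; exact: addr_ge0.
Qed.

Lemma psdZ (c : R) (A : 'M[R]_n) : 0 <= c -> psd A -> psd (c *: A).
Proof.
move=> c0 [sA pA]; split; first by rewrite linearZ /= sA.
move=> x; rewrite -scalemxAr -scalemxAl mxE; exact: mulr_ge0.
Qed.

Lemma psd0 : psd (0 : 'M[R]_n).
Proof. by have := psd_rank1 0; rewrite /rank1 mulmx0. Qed.


Lemma updE (A : T) i B j : upd A i B j = if j == i then B else A j.
Proof. by rewrite ffunE. Qed.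

Lemma all_psd_upd (A : T) i B : all_psd A -> psd B -> all_psd (upd A i B).
Proof. by move=> hA hB j; rewrite updE; case: ifP => _; [exact: hB | exact: hA]. Qed.

Lemma upd_id (A : T) i : upd A i (A i) = A.
Proof. by apply/ffunP => j; rewrite updE; case: eqP => // ->. Qed.

Lemma upd_upd (A : T) i B C : upd (upd A i B) i C = upd A i C.
Proof. by apply/ffunP => j; rewrite !updE; case: (j == i). Qed.

Lemma psdMn (B : 'M[R]_n) k : psd B -> psd (B *+ k).
Proof. by move=> hB; rewrite -scaler_nat; apply: psdZ. Qed.

Section Gen.
Variable G : T -> R.
Hypothesis HG : multiadditive G.

Lemma G0 (A : T) i : all_psd A -> G (upd A i 0) = 0.
Proof. move=> hA; have := HG i hA psd0 psd0; rewrite addr0; lra. Qed.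

Lemma Gnat (A : T) i B k : all_psd A -> psd B ->
  G (upd A i (B *+ k)) = G (upd A i B) *+ k.
Proof.
move=> hA hB; elim: k => [|k IH]; first by rewrite !mulr0n G0.
by rewrite !mulrS HG ?IH //; apply: psdMn.
Qed.

Lemma Gsum (A : T) i (I : finType) (C : 'M[R]_n) (P : I -> 'M[R]_n) :
  all_psd A -> psd C -> (forall p, psd (P p)) ->
  G (upd A i (C + \sum_p P p)) = G (upd A i C) + \sum_p G (upd A i (P p)).
Proof.
move=> hA hC hP.
pose K (y1 : 'M[R]_n) (y2 : R) := psd y1 /\ G (upd A i (C + y1)) = G (upd A i C) + y2.
suff [] : K (\sum_p P p) (\sum_p G (upd A i (P p))) by [].
apply: (big_rec2 K); first by split; [exact: psd0 | rewrite !addr0].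
move=> p y1 y2 _ [h1 h2]; split; first exact: psdD.
by rewrite addrCA HG //; [rewrite -addrCA h2 addrCA | apply: psdD].
Qed.

Hypothesis Gpos : forall A, all_psd A -> 0 <= G A.

Lemma Gmono (A : T) i B B' : all_psd A -> psd B -> psd (B' - B) ->
  G (upd A i B) <= G (upd A i B').
Proof.
move=> hA hB hB'; have -> : B' = B + (B' - B) by rewrite addrC subrK.
rewrite HG //; rewrite lerDl; apply: Gpos; exact: all_psd_upd.
Qed.

Lemma Grat (A : T) i B (k N : nat) : all_psd A -> psd B -> (0 < N)%N ->
  G (upd A i ((k%:R / N%:R) *: B)) = k%:R / N%:R * G (upd A i B).
Proof.
move=> hA hB N0.
have hN : (N%:R : R) != 0 by rewrite pnatr_eq0 -lt0n.
have hq : 0 <= (k%:R / N%:R : R) by apply: divr_ge0.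
have e : ((k%:R / N%:R) *: B) *+ N = B *+ k.
  by rewrite scalerMnl -mulr_natr divfK // scaler_nat.
have := @Gnat A i _ N hA (psdZ hq hB); rewrite e Gnat // => h.
apply: (mulIf hN); by rewrite mulr_natr -h mulrAC divfK // mulr_natl.
Qed.

Lemma close_eq (x y v : R) : 0 <= v ->
  (forall N : nat, (0 < N)%N -> `|x - y| <= v / N%:R) -> x = y.
Proof.
move=> v0 h; apply/eqP; rewrite -subr_eq0; apply: contraT => ne.
have e0 : 0 < `|x - y| by rewrite normr_gt0.
set a := Num.Def.archi_bound (v / `|x - y|).
have hN := h a.+1 isT.
have := @archi_boundP _ (v / `|x - y|) (divr_ge0 v0 (ltW e0)).
rewrite -/a ltr_pdivrMr // => h2.
have NP : (0 : R) < a.+1%:R by rewrite ltr0n.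
rewrite ler_pdivlMr // in hN.
have h3 : a%:R * `|x - y| <= a.+1%:R * `|x - y|.
  by rewrite ler_wpM2r ?ler_nat // ltW.
have : v < v.
  by apply: (lt_le_trans h2); apply: (le_trans h3); rewrite mulrC.
by rewrite ltxx.
Qed.

Lemma Ghom (A : T) i B (s : R) : all_psd A -> psd B -> 0 <= s ->
  G (upd A i (s *: B)) = s * G (upd A i B).
Proof.
move=> hA hB s0.
have v0 : 0 <= G (upd A i B) by apply: Gpos; apply: all_psd_upd.
apply: (close_eq v0) => N N0.
have NP : (0 : R) < N%:R by rewrite ltr0n.
set k := Num.Def.truncn (s * N%:R).
have /andP [hk1 hk2] : (k%:R <= s * N%:R) && (s * N%:R < k.+1%:R).
  by apply: truncn_itv; apply: mulr_ge0 => //; apply: ltW.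
have q1s : k%:R / N%:R <= s by rewrite ler_pdivrMr.
have q2s : s <= k.+1%:R / N%:R by rewrite ler_pdivlMr // ltW.
have low : G (upd A i ((k%:R / N%:R) *: B)) <= G (upd A i (s *: B)).
  apply: Gmono => //; first by apply: psdZ => //; apply: divr_ge0.
  by rewrite -scalerBl; apply: psdZ; rewrite // subr_ge0.
have up : G (upd A i (s *: B)) <= G (upd A i ((k.+1%:R / N%:R) *: B)).
  apply: Gmono => //; first exact: psdZ.
  by rewrite -scalerBl; apply: psdZ; rewrite // subr_ge0.
rewrite !Grat // in low up.
set v := G (upd A i B) in v0 low up *.
set w := G (upd A i (s *: B)) in low up *.
have d : k.+1%:R / N%:R * v - k%:R / N%:R * v = v / N%:R.
  by rewrite -mulrBl -mulrBl -natrB // subSnn mul1r mulrC.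
have l1 : k%:R / N%:R * v <= s * v by apply: ler_wpM2r.
have l2 : s * v <= k.+1%:R / N%:R * v by apply: ler_wpM2r.
rewrite ler_norml; apply/andP; split; lra.
Qed.

End Gen.


Lemma det_expand m (B : 'I_m -> 'M[R]_n) (lam : 'I_m -> R) :
  \det (\sum_(k < m) lam k *: B k) =
  \sum_(f : {ffun 'I_n -> 'I_m}) (\prod_j lam (f j)) * \det (\matrix_(i, j) B (f i) i j).
Proof.
have E1 : forall s : 'S_n, \prod_i (\sum_(k < m) lam k *: B k) i (s i) =
    \sum_(f : {ffun 'I_n -> 'I_m}) \prod_i (lam (f i) * B (f i) i (s i)).
  move=> s; transitivity (\prod_i \sum_(k < m) lam k * B k i (s i)).
    by apply: eq_bigr => i _; rewrite summxE; apply: eq_bigr => k _; rewrite mxE.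
  by rewrite bigA_distr_bigA.
rewrite /determinant.
under eq_bigr => s _ do rewrite E1 mulr_sumr.
rewrite exchange_big /=; apply: eq_bigr => f _.
rewrite mulr_sumr; apply: eq_bigr => s _.
rewrite big_split /= mulrCA; congr (_ * (_ * _)).
by apply: eq_bigr => i _; rewrite mxE.
Qed.


Definition Emx (A : T) (f : {ffun 'I_n -> 'I_n}) : R := \det (\matrix_(i, j) A (f i) i j).
Definition imf (f : {ffun 'I_n -> 'I_n}) : {set 'I_n} := f @: [set: 'I_n].
Definition Ncnt : nat := #|[pred f : {ffun 'I_n -> 'I_n} | imf f == setT]|.
Definition Mx (A : T) : R := \sum_(f | imf f == setT) Emx A f.

Lemma sub_imf (f : {ffun 'I_n -> 'I_n}) (S : {set 'I_n}) : (imf f \subset S) = [forall j, f j \in S].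
Proof.
apply/subsetP/forallP => [h j | h x /imsetP [j _ ->]]; last exact: h.
by apply: h; apply/imsetP; exists j; rewrite ?in_setT.
Qed.

Lemma prod_ind (f : {ffun 'I_n -> 'I_n}) (S : {set 'I_n}) :
  \prod_j ((f j \in S)%:R : R) = if imf f \subset S then 1 else 0.
Proof.
rewrite sub_imf; case: (boolP [forall j, f j \in S]) => [/forallP h | /forallPn [j hj]].
  by apply: big1 => j _; rewrite h.
by rewrite (bigD1 j) //= (negbTE hj) mul0r.
Qed.

Lemma imfT_inj (f : {ffun 'I_n -> 'I_n}) : imf f == setT -> injective f.
Proof.
move=> /eqP h; have : #|f @: [set: 'I_n]| == #|[set: 'I_n]| by rewrite -/(imf f) h.
by move/imset_injP => hi x y e; apply: hi; rewrite ?in_setT.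
Qed.

Lemma Ncnt_gt0 : (0 < Ncnt)%N.
Proof.
apply/card_gt0P; exists [ffun j => j]; rewrite inE.
apply/eqP/setP => j; rewrite in_setT; apply/imsetP; exists j; rewrite ?in_setT //.
by rewrite ffunE.
Qed.

Lemma Emx_add (A : T) i (B B' : 'M[R]_n) (f : {ffun 'I_n -> 'I_n}) :
  imf f == setT ->
  Emx (upd A i (B + B')) f = Emx (upd A i B) f + Emx (upd A i B') f.
Proof.
move=> hf; have inj := imfT_inj hf.
have : i \in imf f by rewrite (eqP hf) in_setT.
case/imsetP => r0 _ hr0.
rewrite /Emx (@determinant_multilinear _ _ _ (\matrix_(i0, j) (upd A i B) (f i0) i0 j) (\matrix_(i0, j) (upd A i B') (f i0) i0 j) r0 1 1) ?mul1r //.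
by rewrite !scale1r; apply/rowP => c; rewrite !mxE !ffunE -hr0 eqxx mxE.
apply/matrixP => r c; rewrite !mxE !updE.
  have -> : (f (lift r0 r) == i) = false; last by [].
  by rewrite hr0; apply/eqP => /inj /eqP; rewrite eq_sym (negbTE (neq_lift r0 r)).
apply/matrixP => r c; rewrite !mxE !updE.
  have -> : (f (lift r0 r) == i) = false; last by [].
  by rewrite hr0; apply/eqP => /inj /eqP; rewrite eq_sym (negbTE (neq_lift r0 r)).
Qed.

Lemma Mx_add (A : T) i (B B' : 'M[R]_n) :
  Mx (upd A i (B + B')) = Mx (upd A i B) + Mx (upd A i B').
Proof. by rewrite /Mx -big_split; apply: eq_bigr => f hf; apply: Emx_add. Qed.

Definition rk (X : 'M[R]_n) : T := [ffun k => rank1 (row k X)].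

Lemma all_psd_rk X : all_psd (rk X).
Proof. by move=> k; rewrite ffunE; apply: psd_rank1. Qed.

Lemma inj_imf (f : {ffun 'I_n -> 'I_n}) : injective f -> imf f == setT.
Proof.
move=> inj; rewrite eqEcard subsetT /=.
by rewrite /imf card_imset.
Qed.

Lemma Emx_rk X (f : {ffun 'I_n -> 'I_n}) :
  Emx (rk X) f = (\prod_i X (f i) i) * \det (\matrix_(i, j) X (f i) j).
Proof.
rewrite /Emx.
have -> : \matrix_(i, j) (rk X) (f i) i j =
   diag_mx (\row_i X (f i) i) *m \matrix_(i, j) X (f i) j.
  by rewrite mul_diag_mx; apply/matrixP => i j; rewrite !mxE ffunE rank1E !mxE.
by rewrite det_mulmx det_diag; congr (_ * _); apply: eq_bigr => i _; rewrite mxE.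
Qed.

Lemma Emx_rk_ninj X (f : {ffun 'I_n -> 'I_n}) : ~~ (imf f == setT) -> Emx (rk X) f = 0.
Proof.
move=> hf; rewrite Emx_rk.
case: (boolP [exists i1, exists i2, (i1 != i2) && (f i1 == f i2)]).
  case/existsP => i1 /existsP [i2 /andP [ne /eqP e]].
  by rewrite (determinant_alternate ne) ?mulr0 // => j; rewrite !mxE e.
move=> hn; have inj : injective f.
  move=> x y e; apply/eqP; apply: contraT => ne; case/negP: hn.
  by apply/existsP; exists x; apply/existsP; exists y; rewrite ne e eqxx.
by rewrite (inj_imf inj) in hf.
Qed.

Lemma Mx_rk X : Mx (rk X) = \det X ^+ 2.
Proof.
rewrite /Mx.
transitivity (\sum_(f : {ffun 'I_n -> 'I_n}) (\prod_j (fun _ => (1 : R)) (f j)) * Emx (rk X) f).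
  rewrite big_mkcond; apply: eq_bigr => f _; rewrite big1 // mul1r.
  by case: (boolP (imf f == setT)) => hf0 //; rewrite Emx_rk_ninj.
rewrite -(det_expand (rk X) (fun _ => 1)).
have -> : \sum_(k < n) 1 *: (rk X) k = X^T *m X.
  apply/matrixP => a b; rewrite summxE !mxE; apply: eq_bigr => k _.
  by rewrite scale1r ffunE rank1E !mxE.
by rewrite det_mulmx det_tr expr2.
Qed.

Definition setrow (X : 'M[R]_n) i (y : 'rV[R]_n) : 'M[R]_n :=
  \matrix_(r, j) if r == i then y 0 j else X r j.

Lemma row_setrow X i y k : row k (setrow X i y) = if k == i then y else row k X.
Proof. by apply/rowP => j; rewrite !mxE; case: (k == i); rewrite ?mxE. Qed.

Lemma rk_setrow X i y : rk (setrow X i y) = upd (rk X) i (rank1 y).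
Proof. by apply/ffunP => k; rewrite !ffunE row_setrow; case: (k == i). Qed.

Lemma setrow_id X i : setrow X i (row i X) = X.
Proof. by apply/matrixP => r j; rewrite !mxE; case: eqP => // ->. Qed.

Lemma cof_setrow X i y j : cofactor (setrow X i y) i j = cofactor X i j.
Proof.
rewrite /cofactor; congr (_ * \det _); apply/matrixP => r c; rewrite !mxE.
by rewrite eq_sym (negbTE (neq_lift i r)).
Qed.

Lemma det_setrow X i y : \det (setrow X i y) = \sum_j y 0 j * cofactor X i j.
Proof.
rewrite (expand_det_row _ i); apply: eq_bigr => j _.
by rewrite cof_setrow mxE eqxx.
Qed.

Lemma rank1_par (u h : 'rV[R]_n) :
  rank1 (u + h) + rank1 (u - h) = (rank1 u + rank1 u) + (rank1 h + rank1 h).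
Proof. by apply/matrixP => a b; rewrite !mxE !big_ord1 !mxE; ring. Qed.

Lemma rank1Z (t : R) (y : 'rV[R]_n) : rank1 (t *: y) = t ^+ 2 *: rank1 y.
Proof. by apply/matrixP => a b; rewrite !mxE !big_ord1 !mxE; ring. Qed.

Lemma archi_ex (x d : R) : 0 <= x -> 0 < d -> exists m : nat, x < m%:R * d.
Proof.
move=> x0 d0; exists (Num.Def.archi_bound (x / d)).
by rewrite -ltr_pdivrMr //; apply: archi_boundP; apply: divr_ge0 => //; apply: ltW.
Qed.

Lemma jensen_const (P : R -> R) : (forall t, 0 <= P t) ->
  (forall t, P (t + 1) + P (t - 1) = 2 * P t) -> P 1 = P 0.
Proof.
move=> P0 rec; set d := P 1 - P 0.
have pos : forall m : nat, P m%:R = P 0 + m%:R * d /\ P m.+1%:R = P 0 + m.+1%:R * d.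
  elim => [|m [IH1 IH2]].
    by rewrite /d mulr0n mul0r addr0 mulr1n mul1r; split=> //; lra.
  split=> //; have := rec m.+1%:R.
  have -> : (m.+1%:R + 1 : R) = m.+2%:R by rewrite natr1.
  have -> : (m.+1%:R - 1 : R) = m%:R by rewrite -natr1 addrK.
  have e3 : (m.+2%:R : R) = m%:R + 2 by rewrite -!natr1; lra.
  have e4 : (m.+1%:R : R) = m%:R + 1 by rewrite natr1.
  rewrite e4 in IH2; rewrite e3 e4; lra.
have neg : forall m : nat, P (- m%:R) = P 0 - m%:R * d /\ P (- m.+1%:R) = P 0 - m.+1%:R * d.
  elim => [|m [IH1 IH2]].
    rewrite /d mulr0n oppr0 mul0r subr0 mulr1n mul1r; split=> //.
    have := rec 0; rewrite add0r sub0r; lra.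
  split=> //; have := rec (- m.+1%:R).
  have -> : (- m.+1%:R + 1 : R) = - (m%:R : R) by rewrite -!natr1; lra.
  have -> : (- m.+1%:R - 1 : R) = - (m.+2%:R : R) by rewrite -!natr1; lra.
  have e3 : (m.+2%:R : R) = m%:R + 2 by rewrite -!natr1; lra.
  have e4 : (m.+1%:R : R) = m%:R + 1 by rewrite natr1.
  rewrite e4 in IH2; rewrite e3 e4; lra.
case: (ltrgtP d 0) => hd.
- have hd' : 0 < - d by rewrite oppr_gt0.
  have [m hm] := archi_ex (P0 0) hd'.
  have := P0 m%:R; rewrite (pos m).1; nra.
- have [m hm] := archi_ex (P0 0) hd.
  have := P0 (- m%:R); rewrite (neg m).1; nra.
- rewrite /d in hd; lra.
Qed.

Lemma sum2_delta (g : 'I_n -> 'I_n -> R) a b :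
  \sum_i \sum_j g i j * ((a == i) && (b == j))%:R = g a b.
Proof.
rewrite (bigD1 a) //= [X in _ + X]big1 ?addr0; last first.
  by move=> i hi; apply: big1 => j _; rewrite eq_sym (negbTE hi) mulr0.
rewrite (bigD1 b) //= [X in _ + X]big1 ?addr0 ?eqxx ?mulr1 //.
by move=> j hj; rewrite eq_sym (negbTE hj) andbF mulr0.
Qed.

Lemma rank1_diff i j : rank1 (delta_mx 0 i + delta_mx 0 j) - rank1 (delta_mx 0 i - delta_mx 0 j)
  = 2%:R *: (delta_mx i j + delta_mx j i : 'M[R]_n).
Proof.
apply/matrixP => a b; rewrite !mxE !big_ord1 !mxE /=.
by case: (a == i); case: (a == j); case: (b == i); case: (b == j); rewrite /=; ring.
Qed.

Lemma decomp (A : 'M[R]_n) : A^T = A -> exists pv rv : 'I_n * 'I_n -> 'rV[R]_n,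
  A + \sum_p rank1 (rv p) = \sum_p rank1 (pv p).
Proof.
move=> sA.
pose u (p : 'I_n * 'I_n) : 'rV[R]_n := delta_mx 0 p.1 + delta_mx 0 p.2.
pose w (p : 'I_n * 'I_n) : 'rV[R]_n := delta_mx 0 p.1 - delta_mx 0 p.2.
pose cc (p : 'I_n * 'I_n) := A p.1 p.2 / 4%:R.
have key : \sum_p cc p *: (rank1 (u p) - rank1 (w p)) = A.
  apply/matrixP => a b; rewrite summxE.
  transitivity (\sum_p (A p.1 p.2 / 2%:R * ((a == p.1) && (b == p.2))%:R +
                         A p.1 p.2 / 2%:R * ((a == p.2) && (b == p.1))%:R)).
    apply: eq_bigr => p _; rewrite /u /w rank1_diff !mxE; by rewrite /cc; field.
  rewrite big_split /= -(pair_bigA _ (fun i j => A i j / 2%:R * ((a == i) && (b == j))%:R)).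
  rewrite -(pair_bigA _ (fun i j => A i j / 2%:R * ((a == j) && (b == i))%:R)) /=.
  rewrite sum2_delta exchange_big /=.
  rewrite (sum2_delta (fun j i => A i j / 2%:R)).
  have -> : A b a = A a b by rewrite -[in LHS]sA mxE.
  lra.
pose pv p := if 0 <= cc p then Num.sqrt (cc p) *: u p else Num.sqrt (- cc p) *: w p.
pose rv p := if 0 <= cc p then Num.sqrt (cc p) *: w p else Num.sqrt (- cc p) *: u p.
exists pv, rv.
have hd : forall p, rank1 (pv p) = rank1 (rv p) + cc p *: (rank1 (u p) - rank1 (w p)).
  move=> p; rewrite /pv /rv; case: ifP => h.
    by rewrite !rank1Z sqr_sqrtr // scalerBr addrC subrK.
  have h' : 0 <= - cc p by rewrite oppr_ge0; apply: ltW; rewrite ltNge h.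
  rewrite !rank1Z sqr_sqrtr // scalerBr !scaleNr addrA addNr add0r.
  by [].
rewrite (eq_bigr _ (fun p _ => hd p)) big_split /= key addrC //.
Qed.

Section Disc.
Variable D : T -> R.
Hypothesis HD : is_mixed_discriminant D.

Lemma Dstep (A : T) (S : {set 'I_n}) : all_psd A ->
  \sum_(f | imf f \subset S) (Emx A f - D [ffun j => A (f j)]) = 0.
Proof.
move=> hA.
pose lam := fun k : 'I_n => ((k \in S)%:R : R).
have H := HD.2 n A lam hA (fun k => ler0n _ _).
have H2 := det_expand A lam; rewrite H in H2.
transitivity (\sum_(f : {ffun 'I_n -> 'I_n}) (\prod_j lam (f j)) * (Emx A f - D [ffun j => A (f j)])).
  rewrite big_mkcond; apply: eq_bigr => f _.
  by rewrite /lam prod_ind; case: ifP => _; rewrite ?mul1r ?mul0r.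
under eq_bigr do rewrite mulrBr.
by rewrite sumrB H2 subrr.
Qed.

Lemma Dind (A : T) : all_psd A -> forall S : {set 'I_n},
  \sum_(f | imf f == S) (Emx A f - D [ffun j => A (f j)]) = 0.
Proof.
move=> hA S; elim: {S}_.+1 {-2}S (ltnSn #|S|) => // k IH S hS.
have H := Dstep S hA.
rewrite (partition_big imf (fun T => T \subset S)) // in H.
rewrite (bigD1 S) //= in H.
have Hr : \sum_(U : {set 'I_n} | (U \subset S) && (U != S))
    \sum_(f | (imf f \subset S) && (imf f == U)) (Emx A f - D [ffun j => A (f j)]) = 0.
  apply: big1 => U /andP [sUS nUS].
  rewrite (eq_bigl (fun f => imf f == U)); last first.
    by move=> f; case: eqP => [-> | _]; rewrite ?sUS ?andbF.
  apply: IH; have hp : U \proper S by rewrite properEneq nUS sUS.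
  by have := proper_card hp; move: hS; clear; lia.
rewrite Hr addr0 in H; apply: etrans H.
by apply: eq_bigl => f; case: eqP => [-> | _]; rewrite ?subxx ?andbF.
Qed.

Lemma DMx (A : T) : all_psd A -> Mx A = Ncnt%:R * D A.
Proof.
move=> hA; have := Dind hA setT; rewrite sumrB => /eqP; rewrite subr_eq0 => /eqP e.
rewrite /Mx e.
transitivity (\sum_(f | imf f == setT) D A).
  apply: eq_bigr => f hf; have inj := imfT_inj hf.
  have -> : [ffun j => A (f j)] = [ffun j => A (perm inj j)].
    by apply/ffunP => j; rewrite !ffunE permE.
  exact: HD.1 _ _ hA.
by rewrite (sumr_const [pred f | imf f == setT]) mulr_natl.
Qed.

Lemma DE (A : T) : all_psd A -> D A = Mx A / Ncnt%:R.
Proof.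
move=> hA; rewrite DMx // mulrAC divff ?mul1r //.
by rewrite pnatr_eq0 -lt0n Ncnt_gt0.
Qed.

Lemma D_add : multiadditive D.
Proof.
move=> A i B B' hA hB hB'.
rewrite !DE ?Mx_add ?mulrDl //; apply: all_psd_upd => //; exact: psdD.
Qed.

Lemma D_rk X : D (rk X) = \det X ^+ 2 / Ncnt%:R.
Proof. by rewrite DE ?Mx_rk //; apply: all_psd_rk. Qed.

Section FF.
Variable F : T -> R.
Hypothesis Fpos : forall A, all_psd A -> 0 <= F A.
Hypothesis Fadd : multiadditive F.
Variable c : R.
Hypothesis Fc : forall A, all_psd A -> F A <= c * D A.

Definition f (X : 'M[R]_n) := F (rk X).

Lemma f_ge0 X : 0 <= f X.
Proof. exact: Fpos (all_psd_rk X). Qed.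

Lemma f_zero X : \det X = 0 -> f X = 0.
Proof.
move=> h; apply/eqP; rewrite eq_le f_ge0 andbT.
by have := Fc (all_psd_rk X); rewrite D_rk h expr0n /= mul0r mulr0.
Qed.

Lemma q_par X i (u h : 'rV[R]_n) :
  f (setrow X i (u + h)) + f (setrow X i (u - h)) =
  2 * f (setrow X i u) + 2 * f (setrow X i h).
Proof.
rewrite /f !rk_setrow.
have hX := all_psd_rk X.
rewrite -(Fadd i hX (psd_rank1 (u + h)) (psd_rank1 (u - h))) rank1_par.
rewrite (Fadd i hX (psdD (psd_rank1 u) (psd_rank1 u)) (psdD (psd_rank1 h) (psd_rank1 h))).
rewrite !(Fadd i hX (psd_rank1 _) (psd_rank1 _)); lra.
Qed.

Lemma q_hom X i (t : R) (y : 'rV[R]_n) :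
  f (setrow X i (t *: y)) = t ^+ 2 * f (setrow X i y).
Proof.
rewrite /f !rk_setrow rank1Z Ghom //; first exact: all_psd_rk.
  exact: psd_rank1.
exact: sqr_ge0.
Qed.

Lemma q_shift X i (u h : 'rV[R]_n) : f (setrow X i h) = 0 ->
  f (setrow X i (u + h)) = f (setrow X i u).
Proof.
move=> h0.
pose P := fun t : R => f (setrow X i (u + t *: h)).
have := @jensen_const P (fun t => f_ge0 _).
rewrite /P scale1r scale0r addr0; apply => t.
have e1 : u + (t + 1) *: h = (u + t *: h) + h by rewrite scalerDl scale1r addrA.
have e2 : u + (t - 1) *: h = (u + t *: h) - h by rewrite scalerBl scale1r addrA.
by rewrite /P e1 e2 q_par h0 mulr0 addr0.
Qed.


Lemma dlin X i (a b : 'rV[R]_n) (t : R) :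
  \det (setrow X i (a - t *: b)) = \det (setrow X i a) - t * \det (setrow X i b).
Proof.
rewrite !det_setrow mulr_sumr -sumrB; apply: eq_bigr => j _; rewrite !mxE; ring.
Qed.

Lemma dZ X i (y : 'rV[R]_n) (t : R) :
  \det (setrow X i (t *: y)) = t * \det (setrow X i y).
Proof.
rewrite !det_setrow mulr_sumr; apply: eq_bigr => j _; rewrite !mxE; ring.
Qed.

Lemma det_delta X i j0 : \det (setrow X i (delta_mx 0 j0)) = cofactor X i j0.
Proof.
rewrite det_setrow (bigD1 j0) //= big1 ?addr0 => [|j hj]; rewrite mxE.
  by rewrite !eqxx mul1r.
by rewrite (negbTE hj) andbF mul0r.
Qed.

Lemma det_deltaD X i a b :
  \det (setrow X i (delta_mx 0 a + delta_mx 0 b)) = cofactor X i a + cofactor X i b.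
Proof.
rewrite -!det_delta !det_setrow -big_split; apply: eq_bigr => j _.
by rewrite mxE mulrDl.
Qed.

Lemma quad X i : exists lam : R, forall y,
  f (setrow X i y) = lam * \det (setrow X i y) ^+ 2.
Proof.
case: (boolP [forall j, cofactor X i j == 0]) => [/forallP hc | /forallPn [j0 hj0]].
  exists 0 => y; rewrite mul0r f_zero // det_setrow big1 // => j _.
  by rewrite (eqP (hc j)) mulr0.
pose y0 := (cofactor X i j0)^-1 *: (delta_mx 0 j0 : 'rV[R]_n).
have dy0 : \det (setrow X i y0) = 1 by rewrite dZ det_delta mulVf.
exists (f (setrow X i y0)) => y.
have hh : f (setrow X i (y - \det (setrow X i y) *: y0)) = 0.
  by apply: f_zero; rewrite dlin dy0 mulr1 subrr.
have := q_shift (\det (setrow X i y) *: y0) hh.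
rewrite addrC subrK => ->.
by rewrite q_hom mulrC.
Qed.

Lemma f_slot X i v : \det X != 0 -> \det (setrow X i v) != 0 ->
  f X / \det X ^+ 2 = f (setrow X i v) / \det (setrow X i v) ^+ 2.
Proof.
move=> h1 h2; have [lam hl] := quad X i.
have e : f X = lam * \det X ^+ 2 by have := hl (row i X); rewrite setrow_id.
by rewrite e hl !mulfK ?expf_neq0.
Qed.

Lemma good_v X Y i : \det X != 0 -> \det Y != 0 ->
  exists v, \det (setrow X i v) != 0 /\ \det (setrow Y i v) != 0.
Proof.
move=> hX hY.
have ex : forall Z : 'M[R]_n, \det Z != 0 -> exists j, cofactor Z i j != 0.
  move=> Z hZ; case: (boolP [exists j, cofactor Z i j != 0]) => [/existsP // | /existsPn hn].
  move: hZ; rewrite (expand_det_row _ i) big1 ?eqxx // => j _.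
  by rewrite (eqP (negbNE (hn j))) mulr0.
have [jx hx] := ex X hX; have [jy hy] := ex Y hY.
case: (eqVneq (cofactor Y i jx) 0) => hYx; last first.
  by exists (delta_mx 0 jx); rewrite !det_delta.
case: (eqVneq (cofactor X i jy) 0) => hXy; last first.
  by exists (delta_mx 0 jy); rewrite !det_delta.
by exists (delta_mx 0 jx + delta_mx 0 jy); rewrite !det_deltaD hYx hXy add0r addr0.
Qed.

Lemma chain : forall m k, (k + m = n)%N -> forall X Y, \det X != 0 -> \det Y != 0 ->
  (forall r : 'I_n, (r < k)%N -> row r X = row r Y) ->
  f X / \det X ^+ 2 = f Y / \det Y ^+ 2.
Proof.
elim => [|m IH] k hk X Y hX hY hr.
  have -> : X = Y; last by [].
  by apply/row_matrixP => r; apply: hr; have := ltn_ord r; lia.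
have kn : (k < n)%N by rewrite -hk; lia.
pose kk := Ordinal kn.
have [v [h1 h2]] := good_v kk hX hY.
rewrite (f_slot hX h1) (f_slot hY h2).
apply: (IH k.+1) => //; first by rewrite addSnnS.
move=> r hrk; rewrite !row_setrow; case: eqP => // ne; apply: hr.
have : nat_of_ord r != k by apply/eqP => e; apply: ne; apply: val_inj.
lia.
Qed.

Lemma f_val X : f X = f 1%:M * \det X ^+ 2.
Proof.
case: (eqVneq (\det X) 0) => h; first by rewrite f_zero // h expr0n mulr0.
have h1 : \det (1%:M : 'M[R]_n) != 0 by rewrite det1 oner_neq0.
have := @chain n 0 (add0n n) X 1%:M h h1 (fun r (hr : (r < 0)%N) => ltac:(by rewrite ltn0 in hr)).
rewrite det1 expr1n divr1 => <-.
by rewrite divfK // expf_neq0.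
Qed.

Lemma F_rk X : F (rk X) = (f 1%:M * Ncnt%:R) * D (rk X).
Proof.
rewrite D_rk -/(f X) f_val.
have hN : (Ncnt%:R : R) != 0 by rewrite pnatr_eq0 -lt0n Ncnt_gt0.
by field.
Qed.

Lemma F_all : forall j, (j <= n)%N -> forall (X : 'M[R]_n) (A : T), all_psd A ->
  (forall k : 'I_n, (j <= k)%N -> A k = rank1 (row k X)) ->
  F A = (f 1%:M * Ncnt%:R) * D A.
Proof.
set a' := f 1%:M * Ncnt%:R.
elim => [|j IH] jn X A hA hk.
  have -> : A = rk X by apply/ffunP => k; rewrite ffunE; apply: hk.
  exact: F_rk.
have jn' : (j < n)%N by [].
pose jj := Ordinal jn'.
have [pv [rv hdec]] := decomp (hA jj).1.
have IHp : forall y, F (upd A jj (rank1 y)) = a' * D (upd A jj (rank1 y)).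
  move=> y; apply: (IH (ltnW jn) (setrow X jj y)).
    by apply: all_psd_upd => //; apply: psd_rank1.
  move=> k hjk; rewrite updE row_setrow; case: (eqVneq k jj) => // ne.
  apply: hk; have : nat_of_ord k != j by apply: contra ne => /eqP e; apply/eqP/val_inj.
  lia.
have eq1 := @Gsum F Fadd A jj _ (A jj) (fun p => rank1 (rv p)) hA (hA jj) (fun p => psd_rank1 _).
have eq2 := @Gsum F Fadd A jj _ 0 (fun p => rank1 (pv p)) hA psd0 (fun p => psd_rank1 _).
have eq3 := @Gsum D D_add A jj _ (A jj) (fun p => rank1 (rv p)) hA (hA jj) (fun p => psd_rank1 _).
have eq4 := @Gsum D D_add A jj _ 0 (fun p => rank1 (pv p)) hA psd0 (fun p => psd_rank1 _).
rewrite hdec upd_id in eq1 eq3.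
rewrite add0r (@G0 F Fadd A jj hA) add0r in eq2.
rewrite add0r (@G0 D D_add A jj hA) add0r in eq4.
have s1 : \sum_p F (upd A jj (rank1 (rv p))) = a' * \sum_p D (upd A jj (rank1 (rv p))).
  by rewrite mulr_sumr; apply: eq_bigr => p _; apply: IHp.
have s2 : \sum_p F (upd A jj (rank1 (pv p))) = a' * \sum_p D (upd A jj (rank1 (pv p))).
  by rewrite mulr_sumr; apply: eq_bigr => p _; apply: IHp.
have eD : D A = \sum_p D (upd A jj (rank1 (pv p))) - \sum_p D (upd A jj (rank1 (rv p))).
  by rewrite -eq4 eq3 addrK.
rewrite eD mulrBr -s1 -s2 -eq2 eq1 addrK //.
Qed.

Lemma main_exists : exists a : R, forall A, all_psd A -> F A = a * D A.
Proof.
exists (f 1%:M * Ncnt%:R) => A hA.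
apply: (@F_all n (leqnn n) 0 A hA) => k; have := ltn_ord k; lia.
Qed.
End FF.
End Disc.
End Main.

Theorem corollary3 (R : realType) (n : nat) (D F : {ffun 'I_n -> 'M[R]_n} -> R) :
  (1 <= n)%N ->
  is_mixed_discriminant D ->
  (forall A, all_psd A -> 0 <= F A) ->
  multiadditive F ->
  (exists c : R, forall A, all_psd A -> F A <= c * D A) ->
  exists a : R, forall A, all_psd A -> F A = a * D A.
Proof.
move=> _ HD Fpos Fadd [c Fc].
exact: (main_exists HD Fpos Fadd Fc).
Qed.
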